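(* Let $\mathbf A$ be an algebra with a Mal'cev term, let $n\ge1$, let $q_n$ be a strong $n$-cube term of $\mathbf A$, and let $\alpha_0,\dots,\alpha_{n-1}$ be congruences of $\mathbf A$. Then a tuple $\mathbf a\in A^{2^n}$ belongs to $\Delta(\alpha_0,\dots,\alpha_{n-1})$ if and only if both (a) for every $j<n$, $(a_k\mid k<2^n,\ k_{(j)}=0)\in\Delta(\alpha_i\mid i<n,\ i\neq j)$, and (b) $q_n(a_0,\dots,a_{2^n-2})\equiv a_{2^n-1}\pmod{[\alpha_0,\dots,\alpha_{n-1}]}$.
   Context: A Mal'cev term is a ternary term $q$ with $q(x,x,y)\approx y\approx q(y,x,x)$. For $k\ge0$, $k_{(i)}$ denotes the $i$-th binary digit of $k$ (least significant is $i=0$). For $i<n$ let $\rho_i(k)$ be $k$ with its $i$-th binary digit set to $0$. A strong $n$-cube term is a $(2^n-1)$-ary term $q_n$ such that for each $i<n$ the identity $q_n(y_{\rho_i(0)},\dots,y_{\rho_i(2^n-2)})\approx y_{\rho_i(2^n-1)}$ holds. Tuples in $A^m$ are indexed by $0,\dots,m-1$; $(a_k\mid\phi(k))$ denotes the tuple of the $a_k$ with $\phi(k)$ in increasing order of $k$. For $a,b\in A$ and $i<n$, $\mathbf c_i^n(a,b)\in A^{2^n}$ has $k$-th coordinate $a$ if $k_{(i)}=0$ and $b$ if $k_{(i)}=1$. $\Delta(\alpha_0,\dots,\alpha_{n-1})$ is the subuniverse of $\mathbf A^{2^n}$ generated by $\{\mathbf c_i^n(a,b): i<n,\ (a,b)\in\alpha_i\}$,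 and $\Delta()=A$; $\Delta(\alpha_i\mid i\in I)$ means $\Delta$ of the $\alpha_i$, $i\in I$, listed in increasing order of $i$. Higher commutator (Bulatov): for congruences $\alpha_0,\dots,\alpha_{n-1},\gamma$, say $\alpha_0,\dots,\alpha_{n-2}$ centralize $\alpha_{n-1}$ modulo $\gamma$ if for all tuples $\mathbf a_i,\mathbf b_i$ ($i<n$, with $\mathbf a_i\neq\mathbf b_i$ congruent modulo $\alpha_i$ coordinatewise) and every term operation $t$ such that $t(\mathbf x_0,\dots,\mathbf x_{n-2},\mathbf a_{n-1})\equiv_\gamma t(\mathbf x_0,\dots,\mathbf x_{n-2},\mathbf b_{n-1})$ for all $(\mathbf x_0,\dots,\mathbf x_{n-2})\in(\{\mathbf a_0,\mathbf b_0\}\times\dots\times\{\mathbf a_{n-2},\mathbf b_{n-2}\})\setminus\{(\mathbf b_0,\dots,\mathbf b_{n-2})\}$, we have $t(\mathbf b_0,\dots,\mathbf b_{n-2},\mathbf a_{n-1})\equiv_\gamma t(\mathbf b_0,\dots,\mathbf b_{n-2},\mathbf b_{n-1})$. $[\alpha_0,\dots,\alpha_{n-1}]$ is the smallest such $\gamma$. *)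

(* Defs.v *)
From mathcomp Require Import all_boot.
Set Implicit Arguments. Unset Strict Implicit. Unset Printing Implicit Defensive.

Definition bit (k i : nat) : bool := odd (k %/ 2 ^ i).

Definition rho (i k : nat) : nat := if bit k i then k - 2 ^ i else k.

Section UA.
Variables (F : Type) (ar : F -> nat) (A : Type).
Variable op : forall f : F, ('I_(ar f) -> A) -> A.

Inductive term (V : Type) : Type :=
  | Var : V -> term V
  | App : forall f : F, ('I_(ar f) -> term V) -> term V.

Fixpoint eval (V : Type) (e : V -> A) (t : term V) : A :=
  match t with
  | Var v => e v
  | App f ts => op (fun j => eval e (ts j))
  end.

Definition has_malcev_term : Prop :=
  exists q : term 'I_3, forall x y : A,
    eval (fun i : 'I_3 => nth y [:: x; x; y] i) q = y /\
    eval (fun i : 'I_3 => nth y [:: y; x; x] i) q = y.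

Definition strong_cube_term (n : nat) (q : term 'I_(2 ^ n - 1)) : Prop :=
  forall i, i < n -> forall y : nat -> A,
    eval (fun k : 'I_(2 ^ n - 1) => y (rho i k)) q = y (rho i (2 ^ n - 1)).

Definition congruence (alpha : A -> A -> Prop) : Prop :=
  [/\ (forall x, alpha x x),
      (forall x y, alpha x y -> alpha y x),
      (forall x y z, alpha x y -> alpha y z -> alpha x z) &
      (forall f (xs ys : 'I_(ar f) -> A),
          (forall j, alpha (xs j) (ys j)) -> alpha (op xs) (op ys))].

Definition subuniverse_pow (m : nat) (S : ('I_m -> A) -> Prop) : Prop :=
  forall f (xs : 'I_(ar f) -> 'I_m -> A),
    (forall j, S (xs j)) -> S (fun k => op (fun j => xs j k)).

Definition Sg_pow (m : nat) (G : ('I_m -> A) -> Prop) (x : 'I_m -> A) : Prop :=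
  forall S, subuniverse_pow S -> (forall z, G z -> S z) -> S x.

Definition cvec (n i : nat) (a b : A) : 'I_(2 ^ n) -> A :=
  fun k => if bit k i then b else a.

(* A tuple of A^{2^n} is given by a function x : nat -> A (only x 0, ...,
   x (2^n-1) matter).  Delta() = A (i.e. every tuple) when n = 0. *)
Definition Delta (n : nat) (alpha : nat -> A -> A -> Prop) (x : nat -> A) : Prop :=
  n = 0 \/
  Sg_pow (fun z : 'I_(2 ^ n) -> A =>
            exists i, i < n /\ exists a b, alpha i a b /\
              forall k, z k = @cvec n i a b k)
         (fun k : 'I_(2 ^ n) => x k).

(* Bulatov's centrality: alpha 0, ..., alpha (n-2) centralize alpha (n-1)
   modulo gamma.  Tuple a_i, b_i has length m i; a term operation of arity
   m_0 + ... + m_{n-1} is a term whose variables are the pairs (i, k),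
   k < m i. *)
Definition centralizes (n : nat) (alpha : nat -> A -> A -> Prop)
    (gamma : A -> A -> Prop) : Prop :=
  forall (m : 'I_n -> nat) (a b : forall i : 'I_n, 'I_(m i) -> A),
    (forall i : 'I_n, exists k, a i k <> b i k) ->
    (forall (i : 'I_n) k, alpha i (a i k) (b i k)) ->
    forall t : term {i : 'I_n & 'I_(m i)},
    let val (s : nat -> bool) (last : bool) :=
      eval (fun v : {i : 'I_n & 'I_(m i)} =>
              let i := projT1 v in
              if (i == n.-1 :> nat) then (if last then b i (projT2 v) else a i (projT2 v))
              else (if s i then b i (projT2 v) else a i (projT2 v))) t in
    (forall s : nat -> bool, (exists i, i < n.-1 /\ s i = false) ->
        gamma (val s false) (val s true)) ->
    gamma (val (fun _ => true) false) (val (fun _ => true) true).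

Definition hcomm (n : nat) (alpha : nat -> A -> A -> Prop) (x y : A) : Prop :=
  forall gamma, congruence gamma -> centralizes n alpha gamma -> gamma x y.

End UA.

Definition drop_cong (A : Type) (n j : nat) (alpha : nat -> A -> A -> Prop) :
    nat -> A -> A -> Prop :=
  fun l => alpha (nth 0 [seq i <- iota 0 n | i != j] l).

Definition face0 (A : Type) (n j : nat) (a : nat -> A) : nat -> A :=
  fun l => a (nth 0 [seq k <- iota 0 (2 ^ n) | ~~ bit k j] l).

(* Main.v *)
Require Import Defs.
From Stdlib Require Import PeanoNat FunctionalExtensionality Classical.
From mathcomp Require Import all_boot zify.
Set Implicit Arguments. Unset Strict Implicit. Unset Printing Implicit Defensive.

Lemma powE i : 2 ^ i = Nat.pow 2 i.
Proof. elim: i => [|i IH] //=. rewrite expnS IH. lia. Qed.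

Lemma divE m d : 0 < d -> m %/ d = Nat.div m d.
Proof. move=> d0. apply: (@Nat.div_unique _ _ _ (m %% d)).
 - apply/ltP. exact: ltn_pmod.
 - rewrite {1}(divn_eq m d). lia. Qed.

Lemma oddE m : odd m = Nat.odd m.
Proof.
elim: m => [|m IH] //=. rewrite Nat.odd_succ IH.
by rewrite -Nat.negb_odd; case: (Nat.odd m).
Qed.

Lemma bit_eq : bit = Nat.testbit.
Proof.
apply: functional_extensionality => k; apply: functional_extensionality => i.
by rewrite /bit Nat.testbit_odd Nat.shiftr_div_pow2 oddE divE ?expn_gt0 // powE.
Qed.

Notation tb := Nat.testbit.

Lemma modE m d : 0 < d -> m %% d = Nat.modulo m d.
Proof. move=> d0. apply: (@Nat.mod_unique _ _ (m %/ d)).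
 - apply/ltP. exact: ltn_pmod.
 - rewrite {1}(divn_eq m d). lia. Qed.

Lemma bits_high x n i : x < 2 ^ n -> n <= i -> tb x i = false.
Proof.
move=> xn ni. have -> : x = Nat.modulo x (Nat.pow 2 n).
  rewrite Nat.mod_small //. rewrite -powE. by apply/ltP.
apply: Nat.mod_pow2_bits_high. by apply/leP.
Qed.

Lemma lt_bits x n : (forall i, n <= i -> tb x i = false) -> x < 2 ^ n.
Proof.
move=> H. have -> : x = Nat.modulo x (Nat.pow 2 n).
  apply: Nat.bits_inj => i. case: (ltnP i n) => hi.
    by rewrite Nat.mod_pow2_bits_low //; apply/ltP.
  by rewrite Nat.mod_pow2_bits_high ?H //; apply/leP.
rewrite powE. apply/ltP. apply: Nat.mod_upper_bound.
have := Nat.pow_nonzero 2 n. lia.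
Qed.

Lemma bits_last n i : tb (2 ^ n - 1) i = (i < n).
Proof.
have -> : 2 ^ n - 1 = Nat.ones n by rewrite Nat.ones_equiv powE; lia.
case: (ltnP i n) => hi.
  by rewrite Nat.ones_spec_low //; apply/ltP.
by rewrite Nat.ones_spec_high //; apply/leP.
Qed.

Lemma eq_bits n x y : x < 2 ^ n -> y < 2 ^ n ->
  (forall i, i < n -> tb x i = tb y i) -> x = y.
Proof.
move=> xn yn H. apply: Nat.bits_inj => i. case: (ltnP i n) => hi; first exact: H.
by rewrite !(bits_high _ hi).
Qed.

Lemma zero_bit n x : x < 2 ^ n -> x <> 2 ^ n - 1 -> exists2 j, j < n & tb x j = false.
Proof.
move=> xn xl. case: (boolP [exists j : 'I_n, ~~ tb x j]).
  by move=> /existsP [j hj]; exists j => //; move: hj; case: (tb x j).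
move=> /existsPn H. exfalso; apply: xl. apply: (@eq_bits n) => //.
  rewrite ltn_subLR ?expn_gt0 //. 
move=> i hi. rewrite bits_last hi. have := H (Ordinal hi). by case: (tb x i).
Qed.

Lemma rho_bits i k j : tb (rho i k) j = tb k j && (i != j).
Proof.
rewrite /rho bit_eq. case E: (tb k i).
  have H0 : Nat.ldiff (Nat.pow 2 i) k = 0.
    apply: Nat.bits_inj_0 => m. rewrite Nat.ldiff_spec Nat.pow2_bits_eqb.
    case: (eqVneq i m) => [<-|ne]; first by rewrite Nat.eqb_refl E.
    by have -> : (i =? m) = false by apply/Nat.eqb_neq/eqP.
  have -> : k - 2 ^ i = Nat.ldiff k (Nat.pow 2 i) by rewrite -(Nat.sub_nocarry_ldiff _ _ H0) powE; lia.
  rewrite Nat.ldiff_spec Nat.pow2_bits_eqb. case: (eqVneq i j) => [->|ne].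
    by rewrite Nat.eqb_refl andbF.
  by have -> : (i =? j) = false by apply/Nat.eqb_neq/eqP.
case: (eqVneq i j) => [<-|]; first by rewrite E.
by rewrite andbT.
Qed.

Lemma tb_pow i j : tb (2 ^ i) j = (i == j).
Proof. rewrite powE Nat.pow2_bits_eqb. by apply/idP/idP => [/Nat.eqb_spec ->|/eqP ->]; rewrite ?Nat.eqb_refl. Qed.

Definition ins (j l : nat) := Nat.lor (Nat.land l (Nat.ones j)) (Nat.shiftl (Nat.shiftr l j) j.+1).
Definition del (j x : nat) := Nat.lor (Nat.land x (Nat.ones j)) (Nat.shiftl (Nat.shiftr x j.+1) j).
Definition sig (j i : nat) := if i < j then i else i.+1.

Lemma tb_ones j i : tb (Nat.ones j) i = (i < j).
Proof.
case: (ltnP i j) => h. by rewrite Nat.ones_spec_low //; apply/ltP.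
by rewrite Nat.ones_spec_high //; apply/leP.
Qed.

Lemma tb_shiftl y k i : tb (Nat.shiftl y k) i = if i < k then false else tb y (i - k).
Proof.
case: (ltnP i k) => h. by rewrite Nat.shiftl_spec_low //; apply/ltP.
rewrite Nat.shiftl_spec_high' //; apply/leP => //.
Qed.

Lemma tb_shiftr y k i : tb (Nat.shiftr y k) i = tb y (i + k).
Proof. by rewrite Nat.shiftr_spec'. Qed.

Lemma ins_bits j l i : tb (ins j l) i = if i < j then tb l i else if i == j then false else tb l i.-1.
Proof.
rewrite /ins Nat.lor_spec Nat.land_spec tb_ones tb_shiftl tb_shiftr.
case: (ltngtP i j) => h.
- by rewrite andbT ltnS (ltnW h) orbF.
- rewrite andbF orFb ltnS leqNgt h. congr (tb l _). lia.
- by rewrite h ltnSn andbF.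
Qed.

Lemma del_bits j x i : tb (del j x) i = tb x (sig j i).
Proof.
rewrite /del /sig Nat.lor_spec Nat.land_spec tb_ones tb_shiftl tb_shiftr.
case: (ltnP i j) => h. by rewrite andbT orbF.
rewrite andbF orFb. congr (tb x _). lia.
Qed.

Lemma ins_sig j l i : tb (ins j l) (sig j i) = tb l i.
Proof.
rewrite ins_bits /sig. case: (ltnP i j) => h; first by rewrite h.
have h1 : (i.+1 < j) = false by lia.
have h2 : (i.+1 == j) = false by lia.
by rewrite h1 h2.
Qed.

Lemma ins_j j l : tb (ins j l) j = false.
Proof. by rewrite ins_bits ltnn eqxx. Qed.

Lemma ins_del j x : tb x j = false -> ins j (del j x) = x.
Proof.
move=> hx. apply: Nat.bits_inj => i. rewrite ins_bits.
case: (ltngtP i j) => h.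
- by rewrite del_bits /sig h.
- have e3 : (i.-1 < j) = false by lia.
  rewrite del_bits /sig e3. congr (tb x _). lia.
- by rewrite h hx.
Qed.

Lemma del_ins j l : del j (ins j l) = l.
Proof. apply: Nat.bits_inj => i. by rewrite del_bits ins_sig. Qed.

Lemma del_lt n j x : j < n -> x < 2 ^ n -> del j x < 2 ^ n.-1.
Proof.
move=> jn xn. apply: lt_bits => i hi. rewrite del_bits /sig.
have e : (i < j) = false by lia. rewrite e.
apply: (bits_high xn). lia.
Qed.

Lemma ins_lt n j l : j < n -> l < 2 ^ n.-1 -> ins j l < 2 ^ n.
Proof.
move=> jn ln. apply: lt_bits => i hi. rewrite ins_bits.
have e1 : (i < j) = false by lia. have e2 : (i == j) = false by lia.
rewrite e1 e2. apply: (bits_high ln). lia.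
Qed.

Lemma ins_arith j l : ins j l = l + l %/ 2 ^ j * 2 ^ j.
Proof.
rewrite /ins -Nat.lxor_lor; last first.
  apply: Nat.bits_inj_0 => i. rewrite Nat.land_spec Nat.land_spec tb_ones tb_shiftl.
  case: (ltnP i j) => h; last by rewrite andbF.
  have e : (i < j.+1) = true by lia. by rewrite e andbF.
rewrite -Nat.add_nocarry_lxor; last first.
  apply: Nat.bits_inj_0 => i. rewrite Nat.land_spec Nat.land_spec tb_ones tb_shiftl.
  case: (ltnP i j) => h; last by rewrite andbF.
  have e : (i < j.+1) = true by lia. by rewrite e andbF.
rewrite Nat.land_ones Nat.shiftl_mul_pow2 Nat.shiftr_div_pow2 -!powE -modE ?expn_gt0 // -divE ?expn_gt0 //.
move: (divn_eq l (2 ^ j)). rewrite expnS.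
move: (l %/ 2 ^ j) (l %% 2 ^ j) (2 ^ j) => D M P E. nia.
Qed.

Lemma ins_mono j : {homo ins j : x y / x < y}.
Proof.
move=> x y h. rewrite !ins_arith. apply: leq_ltn_trans (_ : x + y %/ 2 ^ j * 2 ^ j < _).
  by rewrite leq_add2l leq_mul2r leq_div2r ?orbT // ltnW.
by rewrite ltn_add2r.
Qed.

Lemma filter_iota_map (P : pred nat) N M (g : nat -> nat) :
  {homo g : x y / x < y} ->
  (forall k, k < N -> P k -> exists2 l, l < M & k = g l) ->
  (forall l, l < M -> g l < N /\ P (g l)) ->
  [seq k <- iota 0 N | P k] = map g (iota 0 M).
Proof.
move=> hg H1 H2. apply: (@irr_sorted_eq _ ltn); first exact: ltn_trans.
- exact: ltnn.
- apply: sorted_filter; [exact: ltn_trans | exact: iota_ltn_sorted].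
- apply: (homo_sorted hg). exact: iota_ltn_sorted.
move=> k. rewrite mem_filter mem_iota add0n /=. apply/andP/mapP.
  move=> [pk kn]. have [l ln ->] := H1 k kn pk. by exists l => //; rewrite mem_iota.
move=> [l]; rewrite mem_iota add0n /= => ln ->. by have [? ?] := H2 l ln; split.
Qed.

Lemma sig_mono j : {homo sig j : x y / x < y}.
Proof. move=> x y h. rewrite /sig. case: (ltnP x j); case: (ltnP y j); lia. Qed.

Lemma face_nth n j l : j < n -> l < 2 ^ n.-1 ->
  nth 0 [seq k <- iota 0 (2 ^ n) | ~~ bit k j] l = ins j l.
Proof.
move=> jn ln. rewrite bit_eq (@filter_iota_map _ _ (2 ^ n.-1) (ins j)).
- by rewrite (nth_map 0) ?size_iota // nth_iota.
- exact: ins_mono.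
- move=> k kn hk. exists (del j k); first exact: del_lt.
  by rewrite ins_del //; move: hk; case: (tb k j).
- move=> l' hl. by rewrite ins_lt // ins_j.
Qed.

Lemma dropc_nth n j l : j < n -> l < n.-1 ->
  nth 0 [seq i <- iota 0 n | i != j] l = sig j l.
Proof.
move=> jn ln. rewrite (@filter_iota_map _ _ n.-1 (sig j)).
- by rewrite (nth_map 0) ?size_iota // nth_iota.
- exact: sig_mono.
- move=> k kn hk. exists (if k < j then k else k.-1); rewrite /sig.
    case: (ltnP k j) => h; lia.
  case: (ltnP k j) => h. by rewrite h. 
  have e : (k.-1 < j) = false by move: hk; lia. rewrite e. move: hk; lia.
- move=> l' hl. rewrite /sig. case: (ltnP l' j) => h; lia.
Qed.

Lemma eqbE a b : (a =? b) = (a == b).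
Proof. by apply/Nat.eqb_spec/eqP. Qed.

Lemma clear_bits a i j : tb (Nat.clearbit a i) j = tb a j && (i != j).
Proof. by rewrite Nat.clearbit_eqb eqbE. Qed.

Lemma lxor_lt n x y : x < 2 ^ n -> y < 2 ^ n -> Nat.lxor x y < 2 ^ n.
Proof.
move=> hx hy. apply: lt_bits => i hi. by rewrite Nat.lxor_spec (bits_high hx) ?(bits_high hy).
Qed.

Lemma land_lt n x y : x < 2 ^ n -> Nat.land x y < 2 ^ n.
Proof.
move=> hx. apply: lt_bits => i hi. by rewrite Nat.land_spec (bits_high hx).
Qed.

Lemma clear_lt n x i : x < 2 ^ n -> Nat.clearbit x i < 2 ^ n.
Proof.
move=> hx. apply: lt_bits => k hk. by rewrite clear_bits (bits_high hx).
Qed.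

Lemma last_lt n : 0 < n -> 2 ^ n - 1 < 2 ^ n.
Proof. move=> _. rewrite ltn_subLR ?expn_gt0 //. Qed.

Fixpoint build (s : nat -> bool) (m : nat) : nat :=
  match m with 0 => 0 | m'.+1 => Nat.lor (build s m') (if s m' then 2 ^ m' else 0) end.

Lemma build_bits s m i : tb (build s m) i = (i < m) && s i.
Proof.
elim: m => [|m IH] /=; first by rewrite Nat.bits_0.
rewrite Nat.lor_spec IH. case: (eqVneq i m) => [->|ne].
  rewrite ltnn ltnSn /=. by case: (s m); rewrite ?tb_pow ?eqxx ?Nat.bits_0.
have e : (i < m.+1) = (i < m) by lia.
rewrite e.
have -> : tb (if s m then 2 ^ m else 0) i = false.
  by case: (s m); rewrite ?tb_pow ?Nat.bits_0 // eq_sym (negbTE ne).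
by rewrite orbF.
Qed.

Lemma build_lt s m : build s m < 2 ^ m.
Proof. apply: lt_bits => i hi. by rewrite build_bits ltnNge hi. Qed.

Lemma lxorKr x y : Nat.lxor (Nat.lxor x y) y = x.
Proof. by rewrite Nat.lxor_assoc Nat.lxor_nilpotent Nat.lxor_0_r. Qed.

Lemma lxorKl x y : Nat.lxor x (Nat.lxor x y) = y.
Proof. by rewrite -Nat.lxor_assoc Nat.lxor_nilpotent Nat.lxor_0_l. Qed.

Lemma lxor_eq x M L : (Nat.lxor x M == L) = (x == Nat.lxor L M).
Proof.
apply/eqP/eqP => [<-|->]; first by rewrite lxorKr.
by rewrite lxorKr.
Qed.

Unset Implicit Arguments.

Section Alg.
Variables (F : Type) (ar : F -> nat) (A : Type).
Variable op : forall f : F, ('I_(ar f) -> A) -> A.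

Definition gens n (alpha : nat -> A -> A -> Prop) := (fun z : 'I_(2 ^ n) -> A =>
            exists i, i < n /\ exists a b, alpha i a b /\
              forall k, z k = @cvec A n i a b k).

Definition Dl n alpha (x : nat -> A) := Sg_pow op (gens n alpha) (fun k : 'I_(2 ^ n) => x k).

Set Implicit Arguments.

Lemma DeltaE n alpha x : Delta op n alpha x <-> n = 0 \/ Dl n alpha x.
Proof. by []. Qed.

Lemma Dl_ext n alpha x y : (forall k, k < 2 ^ n -> x k = y k) -> Dl n alpha x -> Dl n alpha y.
Proof.
move=> H. rewrite /Dl. have -> // : (fun k : 'I_(2 ^ n) => x k) = (fun k => y k).
apply: functional_extensionality => k. exact: H.
Qed.

Lemma Sg_sub m (G : ('I_m -> A) -> Prop) : subuniverse_pow op (Sg_pow op G).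
Proof. move=> f xs H S hS hG. apply: (hS) => j. exact: (H j S hS hG). Qed.

Lemma Dl_gen n alpha i a b : i < n -> alpha i a b ->
  Dl n alpha (fun k => if tb k i then b else a).
Proof.
move=> hi hab S hS hG. apply: hG. exists i; split => //. exists a, b; split => //.
move=> k. by rewrite /cvec bit_eq.
Qed.

Lemma Dl_const n alpha c : 0 < n -> alpha 0 c c -> Dl n alpha (fun _ => c).
Proof.
move=> n0 h. apply: Dl_ext (Dl_gen n0 h) => k _. by case: (tb k 0).
Qed.

Lemma Dl_term n alpha V (t : term ar V) (xs : V -> nat -> A) :
  (forall v, Dl n alpha (xs v)) -> Dl n alpha (fun k => eval op (fun v => xs v k) t).
Proof.
move=> H. elim: t => [v|f ts IH] /=; first exact: H.
exact: (@Sg_sub _ _ f (fun j (k : 'I_(2 ^ n)) => eval op (fun v => xs v k) (ts j)) IH).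
Qed.

Lemma Sg_map m m' (G : ('I_m -> A) -> Prop) (G' : ('I_m' -> A) -> Prop) (phi : 'I_m' -> 'I_m) :
  (forall z, G z -> Sg_pow op G' (fun k => z (phi k))) ->
  forall x, Sg_pow op G x -> Sg_pow op G' (fun k => x (phi k)).
Proof.
move=> H x hx. apply: (hx (fun x => Sg_pow op G' (fun k => x (phi k)))); last exact: H.
move=> f xs hxs. exact: (@Sg_sub _ G' f (fun j k => xs j (phi k)) hxs).
Qed.

Lemma Dl_map n n' alpha alpha' (phi : nat -> nat) :
  (forall k, k < 2 ^ n' -> phi k < 2 ^ n) ->
  (forall i a b, i < n -> alpha i a b -> Dl n' alpha' (fun k => if tb (phi k) i then b else a)) ->
  forall x, Dl n alpha x -> Dl n' alpha' (fun k => x (phi k)).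
Proof.
move=> hphi hgen x hx.
pose phi' := fun k : 'I_(2 ^ n') => Ordinal (hphi k (ltn_ord k)).
have := @Sg_map _ _ (gens n alpha) (gens n' alpha') phi' _ _ hx. apply.
move=> z [i [hi [a [b [hab hz]]]]].
have -> : (fun k => z (phi' k)) = (fun k : 'I_(2 ^ n') => (fun k => if tb (phi k) i then b else a) k).
  apply: functional_extensionality => k. by rewrite hz /cvec bit_eq.
exact: hgen.
Qed.


Lemma nth3 (T : Type) (d d' x y z : T) (i : 'I_3) : nth d [:: x; y; z] i = nth d' [:: x; y; z] i.
Proof. by case: i => [[|[|[|i]]] hi]. Qed.

Section Main.
Variables (n : nat) (alpha : nat -> A -> A -> Prop) (p : term ar 'I_3).
Hypothesis hn : 0 < n.
Hypothesis hal : forall i, i < n -> congruence op (alpha i).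
Hypothesis hp : forall x y : A,
    eval op (fun i : 'I_3 => nth y [:: x; x; y] i) p = y /\
    eval op (fun i : 'I_3 => nth y [:: y; x; x] i) p = y.

Definition pm x y z := eval op (fun i : 'I_3 => nth z [:: x; y; z] i) p.

Lemma pm1 x y : pm x x y = y.
Proof. exact: (hp x y).1. Qed.

Lemma pm2 x y : pm y x x = y.
Proof.
rewrite /pm. have -> : (fun i : 'I_3 => nth x [:: y; x; x] i) = (fun i => nth y [:: y; x; x] i).
  apply: functional_extensionality => i; exact: nth3.
exact: (hp x y).2.
Qed.

Lemma al_refl i x : i < n -> alpha i x x.
Proof. by move=> /hal [h _ _ _]. Qed.

Lemma al_sym i x y : i < n -> alpha i x y -> alpha i y x.
Proof. by move=> /hal [_ h _ _]; apply: h. Qed.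

Lemma Dl_c c : Dl n alpha (fun _ => c).
Proof. apply: Dl_const => //. exact: al_refl. Qed.

Lemma Dl_mal X Y Z : Dl n alpha X -> Dl n alpha Y -> Dl n alpha Z ->
  Dl n alpha (fun k => pm (X k) (Y k) (Z k)).
Proof.
move=> hX hY hZ.
have := @Dl_term n alpha 'I_3 p (fun i : 'I_3 => nth Z [:: X; Y; Z] i).
have -> : (fun k => eval op (fun v : 'I_3 => nth Z [:: X; Y; Z] v k) p) = (fun k => pm (X k) (Y k) (Z k)).
  apply: functional_extensionality => k. rewrite /pm. congr eval.
  apply: functional_extensionality => i. by case: i => [[|[|[|i]]] hi].
apply. by case => [[|[|[|i]]] hi].
Qed.

Definition Rc x y := Dl n alpha (fun j => if j == 2 ^ n - 1 then y else x).

Lemma Rc_refl x : Rc x x.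
Proof. apply: Dl_ext (Dl_c x) => k _. by case: ifP. Qed.

Lemma Rc_sym x y : Rc x y -> Rc y x.
Proof.
move=> h. apply: Dl_ext (Dl_mal (Dl_c x) h (Dl_c y)) => k _ /=.
case: ifP => _; [exact: pm2 | exact: pm1].
Qed.

Lemma Rc_trans x y z : Rc x y -> Rc y z -> Rc x z.
Proof.
move=> h1 h2. apply: Dl_ext (Dl_mal h1 (Dl_c y) h2) => k _ /=.
case: ifP => _; [exact: pm1 | exact: pm2].
Qed.

Lemma Rc_cong : congruence op Rc.
Proof.
split; [exact: Rc_refl | exact: Rc_sym | exact: Rc_trans |].
move=> f xs ys H.
have := @Sg_sub _ _ f (fun j (k : 'I_(2 ^ n)) => if (k : nat) == 2 ^ n - 1 then ys j else xs j) H.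
rewrite /Rc /Dl. congr (Sg_pow op _). apply: functional_extensionality => k.
by case: ifP.
Qed.


Lemma Dl_upd (c z : nat -> A) (L : seq nat) : uniq L -> Dl n alpha c ->
  (forall q, q \in L -> Dl n alpha (fun j => if j == q then c q else z q)) ->
  Dl n alpha (fun j => if j \in L then z j else c j).
Proof.
elim: L => [|q L IH] /= uL hc hS.
  by apply: Dl_ext hc => k _.
move/andP: uL => [qL uL].
have h1 : Dl n alpha (fun j => if j \in L then z j else c j).
  apply: IH uL hc _ => q' hq'. apply: hS. by rewrite in_cons hq' orbT.
have h2 := hS q (mem_head _ _).
apply: Dl_ext (Dl_mal h1 h2 (Dl_c (z q))) => k _ /=.
rewrite in_cons. case: (eqVneq k q) => [->|ne] /=.
  by rewrite (negbTE qL) pm1.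
by rewrite pm2.
Qed.

Lemma Rcent : centralizes op n alpha Rc.
Proof.
move=> m a b _ hab t val hyp.
pose c k := eval op (fun v : {i : 'I_n & 'I_(m i)} =>
   if tb k (projT1 v) then b (projT1 v) (projT2 v) else a (projT1 v) (projT2 v)) t.
have hc : Dl n alpha c.
  apply: (@Dl_term n alpha _ t (fun v k => if tb k (projT1 v) then b (projT1 v) (projT2 v)
                                              else a (projT1 v) (projT2 v))).
  move=> v /=. apply: Dl_gen; [exact: ltn_ord | exact: hab].
have valc : forall s l k, (forall i, i < n -> tb k i = if i == n.-1 then l else s i) -> val s l = c k.
  move=> s l k hk. rewrite /val /c. congr eval. apply: functional_extensionality => v /=.
  rewrite hk //. by case: ifP.
have hlast : 2 ^ n - 1 < 2 ^ n by apply: last_lt.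
have hn1 : n.-1 < n by rewrite prednK.
pose P := [seq j <- iota 0 (2 ^ n) | tb j n.-1 && (j != 2 ^ n - 1)].
have notP x : tb x n.-1 = false -> x \in P = false.
  by move=> hx; rewrite mem_filter hx.
have hS : forall q, q \in P -> Dl n alpha (fun j => if j == q then c q else c (Nat.clearbit q n.-1)).
  move=> q; rewrite mem_filter mem_iota add0n /= => /andP [/andP [hq1 hq2] hq3].
  have hR : Rc (c (Nat.clearbit q n.-1)) (c q).
    have := hyp (fun i => tb q i). rewrite (valc _ _ (Nat.clearbit q n.-1)); last first.
      move=> i hi. rewrite clear_bits. by case: (eqVneq n.-1 i) => [<-|ne]; rewrite /= ?andbF ?andbT.
    rewrite (valc _ _ q); last first.
      move=> i hi. by case: (eqVneq i n.-1) => [->|].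
    apply. have [j hj hqj] := zero_bit hq3 (elimN eqP hq2).
    exists j; split => //. case: (eqVneq j n.-1) => [e|ne]; first by move: hqj; rewrite e hq1.
    rewrite ltn_neqAle ne /= -ltnS prednK //.
  pose M := Nat.lxor (2 ^ n - 1) q.
  have hM : M < 2 ^ n by apply: lxor_lt.
  have hflip : Dl n alpha (fun k => (fun j => if j == 2 ^ n - 1 then c q else c (Nat.clearbit q n.-1)) (Nat.lxor k M)).
    apply: (@Dl_map n n alpha alpha (fun j => Nat.lxor j M)) hR.
      move=> k hk. exact: lxor_lt.
    move=> i x y hi hxy. rewrite /=.
    case E: (tb M i).
      apply: Dl_ext (Dl_gen hi (al_sym hi hxy)) => k _. by rewrite Nat.lxor_spec E; case: (tb k i).
    apply: Dl_ext (Dl_gen hi hxy) => k _. by rewrite Nat.lxor_spec E; case: (tb k i).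
  apply: Dl_ext hflip => k hk /=. rewrite lxor_eq /M lxorKl. by case: ifP.
have hC := Dl_upd (filter_uniq _ (iota_uniq _ _)) hc hS.
pose u := c (Nat.clearbit (2 ^ n - 1) n.-1).
have hC2 : Dl n alpha (fun k => (fun j => if j \in P then c (Nat.clearbit j n.-1) else c j) (Nat.clearbit k n.-1)).
  apply: (@Dl_map n n alpha alpha (fun k => Nat.clearbit k n.-1)) hC.
    move=> k hk; exact: clear_lt.
  move=> i x y hi hxy. case: (eqVneq n.-1 i) => [e|ne].
    apply: Dl_ext (Dl_c x) => k _. by rewrite clear_bits e eqxx andbF.
  apply: Dl_ext (Dl_gen hi hxy) => k _. by rewrite clear_bits ne andbT.
have := Dl_mal hC hC2 (Dl_c u).
rewrite (valc _ _ (Nat.clearbit (2 ^ n - 1) n.-1)); last first.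
  move=> i hi. rewrite clear_bits bits_last hi /= eq_sym. by case: (i == n.-1).
rewrite (valc _ _ (2 ^ n - 1)); last first.
  move=> i hi. rewrite bits_last hi. by case: ifP.
apply: Dl_ext => k hk /=.
have clr0 x : tb (Nat.clearbit x n.-1) n.-1 = false by rewrite clear_bits eqxx andbF.
rewrite (notP _ (clr0 k)).
case: (eqVneq k (2 ^ n - 1)) => [->|ne].
  idtac.
  have -> : (2 ^ n - 1 \in P) = false by rewrite mem_filter eqxx andbF.
  by rewrite pm2.
case E: (tb k n.-1).
  have -> : k \in P by rewrite mem_filter mem_iota E ne hk.
  by rewrite pm1.
have -> : Nat.clearbit k n.-1 = k.
  apply: Nat.bits_inj => i. rewrite clear_bits.
  by case: (eqVneq n.-1 i) => [<-|]; rewrite ?E ?andbT ?andbF.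
rewrite (notP _ E). by rewrite pm1.
Qed.


Fixpoint rename V W (g : V -> W) (t : term ar V) : term ar W :=
  match t with
  | Var v => Var ar (g v)
  | App f ts => App (fun j => rename g (ts j))
  end.

Lemma eval_rename V W (g : V -> W) (e : W -> A) t :
  eval op e (rename g t) = eval op (fun v => e (g v)) t.
Proof. elim: t => [v|f ts IH] //=. congr (op f _). apply: functional_extensionality => j. exact: IH. Qed.

Fixpoint vb (N : nat) (t : term ar nat) : Prop :=
  match t with
  | Var v => v < N
  | App f ts => forall j, vb N (ts j)
  end.

Lemma vb_mono N N' t : N <= N' -> vb N t -> vb N' t.
Proof. move=> h. elim: t => [v|f ts IH] /=; first by move=> hv; apply: leq_trans h. by move=> H j; apply: IH. Qed.

Lemma vb_exists t : exists N, vb N t.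
Proof.
elim: t => [v|f ts IH]; first by exists v.+1 => /=.
have [Ns hNs] := fin_all_exists IH. exists (\max_j Ns j) => j /=.
apply: vb_mono (hNs j). exact: leq_bigmax.
Qed.

Lemma eval_vb N t (e1 e2 : nat -> A) : vb N t -> (forall v, v < N -> e1 v = e2 v) ->
  eval op e1 t = eval op e2 t.
Proof.
move=> hb he. elim: t hb => [v|f ts IH] /= hb; first exact: he.
congr (op f _). apply: functional_extensionality => j. exact: IH.
Qed.

Definition jof N (h : 0 < N) (w : nat) : 'I_N := Ordinal (ltn_pmod w h).

Lemma jofE N (h : 0 < N) (j : 'I_N) v : jof h (v * N + j) = j.
Proof. apply: val_inj => /=. by rewrite modnMDl modn_small. Qed.

Lemma divjE N (h : 0 < N) (j : 'I_N) v : (v * N + j) %/ N = v.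
Proof. by rewrite divnMDl // divn_small // addn0. Qed.

Definition RepI n alpha (z : 'I_(2 ^ n) -> A) : Prop :=
  exists r : (nat -> nat) * (nat -> A) * (nat -> A) * term ar nat,
  (forall v, r.1.1.1 v < n /\ alpha (r.1.1.1 v) (r.1.1.2 v) (r.1.2 v)) /\
  forall k : 'I_(2 ^ n), z k = eval op (fun v => if tb k (r.1.1.1 v) then r.1.2 v else r.1.1.2 v) r.2.

Lemma Rep_sub : subuniverse_pow op (@RepI n alpha).
Proof.
move=> f xs H. have [u hu] := fin_all_exists H.
case: (posnP (ar f)) => [a0|apos].
  have k0 : 'I_(2 ^ n) by exact: Ordinal (last_lt hn).
  pose e := op f (fun j => xs j k0).
  exists ((fun _ => 0), (fun _ => e), (fun _ => e), Var ar 0) => /=; split.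
    move=> _; split => //. exact: al_refl.
  move=> k. rewrite if_same /e. congr (op f _). apply: functional_extensionality => j.
  exfalso. have := ltn_ord j. move: (j : nat) => jj. by rewrite a0.
pose N := ar f.
exists ((fun w => (u (jof apos w)).1.1.1 (w %/ N)), (fun w => (u (jof apos w)).1.1.2 (w %/ N)),
        (fun w => (u (jof apos w)).1.2 (w %/ N)), App (fun j => rename (fun v => v * N + j) (u j).2)) => /=.
split.
  move=> w. exact: ((hu (jof apos w)).1 (w %/ N)).
move=> k. congr (op f _). apply: functional_extensionality => j.
rewrite ((hu j).2 k) eval_rename. congr eval. apply: functional_extensionality => v.
by rewrite jofE divjE.
Qed.

Lemma Dl_Rep x : Dl n alpha x -> @RepI n alpha (fun k => x k).
Proof.
move=> hx. apply: hx; first exact: Rep_sub.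
move=> z [i [hi [a [b [hab hz]]]]].
exists ((fun _ => i), (fun _ => a), (fun _ => b), Var ar 0) => /=; split => // k.
by rewrite hz /cvec bit_eq.
Qed.

Lemma Rsub gamma x y : congruence op gamma -> centralizes op n alpha gamma -> Rc x y -> gamma x y.
Proof.
move=> hg hcent hR. have [[[[dir av] bv] t] [/= h1 h2]] := Dl_Rep hR.
have [grefl _ _ _] := hg.
have wk : forall k, k < 2 ^ n -> (if k == 2 ^ n - 1 then y else x) =
          eval op (fun v => if tb k (dir v) then bv v else av v) t.
  by move=> k hk; exact: (h2 (Ordinal hk)).
have hlast : 2 ^ n - 1 < 2 ^ n by apply: last_lt.
have hn1 : n.-1 < n by rewrite prednK.
have [N hN] := vb_exists t.
case: (classic (forall i : 'I_n, exists xy : A * A, alpha i xy.1 xy.2 /\ xy.1 <> xy.2)) => [ND|nND].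
  have [ex hex] := fin_all_exists ND.
  pose m := fun _ : 'I_n => N.+1.
  pose a' := fun (i : 'I_n) (k : 'I_(m i)) => if (k < N) && (dir k == i) then av k else (ex i).1.
  pose b' := fun (i : 'I_n) (k : 'I_(m i)) => if (k < N) && (dir k == i) then bv k else (ex i).2.
  pose g := fun v : nat => existT (fun i : 'I_n => 'I_(m i)) (Ordinal (h1 v).1) (inord v : 'I_N.+1).
  have nd : forall i : 'I_n, exists k, a' i k <> b' i k.
    move=> i. exists ord_max. rewrite /a' /b' /= ltnn /=. exact: (hex i).2.
  have hab : forall (i : 'I_n) k, alpha i (a' i k) (b' i k).
    move=> i k. rewrite /a' /b'. case: ifP => [/andP [_ /eqP <-]|_]; [exact: (h1 k).2 | exact: (hex i).1].
  pose VAL := fun (s : nat -> bool) (l : bool) =>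
    eval op (fun v : {i : 'I_n & 'I_(m i)} =>
       let i := projT1 v in
       if (i == n.-1 :> nat) then (if l then b' i (projT2 v) else a' i (projT2 v))
       else (if s i then b' i (projT2 v) else a' i (projT2 v))) (rename g t).
  have H : (forall s, (exists i, i < n.-1 /\ s i = false) -> gamma (VAL s false) (VAL s true)) ->
           gamma (VAL (fun _ => true) false) (VAL (fun _ => true) true) := hcent m a' b' nd hab (rename g t).
  have valE : forall s l kk, (forall i, i < n -> tb kk i = if i == n.-1 then l else s i) ->
    VAL s l = eval op (fun v => if tb kk (dir v) then bv v else av v) t.
    move=> s l kk hk. rewrite /VAL eval_rename. apply: (eval_vb hN) => v hv /=.
    have iv : nat_of_ord (inord v : 'I_N.+1) = v by rewrite inordK // ltnS ltnW.
    rewrite /a' /b' /= iv hv eqxx /=.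
    rewrite hk ?(h1 v).1 //. by case: ifP.
  have hx : forall kk, kk < 2 ^ n -> kk != 2 ^ n - 1 ->
      eval op (fun v => if tb kk (dir v) then bv v else av v) t = x.
    by move=> kk hk ne; rewrite -wk // (negbTE ne).
  have notlast : forall kk i, i < n -> tb kk i = false -> kk != 2 ^ n - 1.
    move=> kk i hi hb. apply/eqP => e. by move: hb; rewrite e bits_last hi.
  have e1 := valE (fun _ => true) false (Nat.clearbit (2 ^ n - 1) n.-1).
  have e2 := valE (fun _ => true) true (2 ^ n - 1).
  have p2 : forall i, i < n -> tb (2 ^ n - 1) i = if i == n.-1 then true else true.
    move=> i hi. rewrite bits_last hi. by case: ifP.
  have p1 : forall i, i < n -> tb (Nat.clearbit (2 ^ n - 1) n.-1) i = if i == n.-1 then false else true.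
    move=> i hi. rewrite clear_bits bits_last hi /= eq_sym. by case: (i == n.-1).
  rewrite (e1 p1) (e2 p2) in H.
  rewrite hx ?clear_lt // in H; last first.
    apply: (notlast _ n.-1) => //. by rewrite clear_bits eqxx andbF.
  rewrite -wk // eqxx in H. apply: H.
  move=> s [i0 [hi0 hs]].
  pose k0 := build (fun i => if i == n.-1 then false else s i) n.
  pose k1 := build (fun i => if i == n.-1 then true else s i) n.
  have hi0n : i0 < n by apply: leq_trans hi0 (leq_pred n).
  have ni0 : (i0 == n.-1) = false by apply/negbTE; rewrite neq_ltn hi0.
  rewrite (valE _ _ k0); last by move=> i hi; rewrite build_bits hi.
  rewrite (valE _ _ k1); last by move=> i hi; rewrite build_bits hi.
  rewrite !hx ?build_lt //.
  - apply: (notlast _ i0) => //. by rewrite build_bits hi0n ni0.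
  - apply: (notlast _ i0) => //. by rewrite build_bits hi0n ni0.
have [i0 hi0] := not_all_ex_not _ _ nND.
have eqi0 : forall u v, alpha i0 u v -> u = v.
  move=> u v huv. apply: NNPP => ne. apply: hi0. by exists (u, v).
have -> : y = x; last exact: grefl.
pose k' := Nat.clearbit (2 ^ n - 1) i0.
have hk' : k' < 2 ^ n by apply: clear_lt.
have nk' : k' != 2 ^ n - 1.
  apply/eqP => e. have := clear_bits (2 ^ n - 1) i0 i0. by rewrite -/k' e bits_last ltn_ord eqxx.
have := wk _ hlast. rewrite eqxx => ->.
have := wk _ hk'. rewrite (negbTE nk') => ->.
congr eval. apply: functional_extensionality => v.
rewrite clear_bits. case: (eqVneq (dir v) i0) => [e|ne].
  have := (h1 v).2. rewrite e => /eqi0 ->. by rewrite !if_same.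
by rewrite andbT.
Qed.


Lemma hcommE x y : hcomm op n alpha x y <-> Rc x y.
Proof.
split; first by move=> H; apply: H; [exact: Rc_cong | exact: Rcent].
move=> hR gamma hg hc. exact: Rsub hg hc hR.
Qed.

Lemma sig_lt j i : j < n -> i < n.-1 -> sig j i < n.
Proof. move=> hj hi. rewrite /sig. case: ifP => _; lia. Qed.

Lemma drop_congE j i : j < n -> i < n.-1 -> drop_cong n j alpha i = alpha (sig j i).
Proof. move=> hj hi. by rewrite /drop_cong dropc_nth. Qed.

Lemma face_proj a j : j < n -> Dl n alpha a -> Delta op n.-1 (drop_cong n j alpha) (face0 n j a).
Proof.
move=> jn ha. case: (posnP n.-1) => [e|npos]; first by left.
right. apply: (@Dl_ext n.-1 _ (fun k => a (ins j k))).
  move=> k hk. by rewrite /face0 face_nth.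
apply: (@Dl_map n n.-1 alpha (drop_cong n j alpha) (ins j)) ha.
  move=> k hk. exact: ins_lt.
move=> i x y hi hxy. case: (ltngtP i j) => h.
- have hi' : i < n.-1 by lia.
  have hxy' : drop_cong n j alpha i x y by rewrite drop_congE // /sig h.
  apply: Dl_ext (Dl_gen hi' hxy') => k _. by rewrite ins_bits h.
- have hi' : i.-1 < n.-1 by lia.
  have hxy' : drop_cong n j alpha i.-1 x y.
    rewrite drop_congE // /sig. have e : (i.-1 < j) = false by lia. rewrite e.
    by rewrite prednK //; lia.
  apply: Dl_ext (Dl_gen hi' hxy') => k _.
  rewrite ins_bits. have e1 : (i < j) = false by lia. have e2 : (i == j) = false by lia.
  by rewrite e1 e2.
- apply: Dl_ext (Dl_const npos _) => [k _|].
    by rewrite h ins_j.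
  rewrite drop_congE //. apply: al_refl. exact: sig_lt.
Qed.

Lemma dcube a : (forall j, j < n -> Delta op n.-1 (drop_cong n j alpha) (face0 n j a)) ->
  forall q : term ar 'I_(2 ^ n - 1),
  Dl n alpha (fun k => eval op (fun m : 'I_(2 ^ n - 1) => a (Nat.land k m)) q).
Proof.
move=> H q.
apply: (@Dl_term n alpha _ q (fun (m : 'I_(2 ^ n - 1)) k => a (Nat.land k m))) => m /=.
have hm : m < 2 ^ n - 1 := ltn_ord m.
have hm' : (m : nat) < 2 ^ n by lia.
have hne : (m : nat) <> 2 ^ n - 1 by lia.
have [j hj hmj] := zero_bit hm' hne.
have := H j hj. case => [e|hf].
  have n1 : n = 1 by lia.
  have m0 : (m : nat) = 0 by move: hm; move: (m : nat) => mm; rewrite n1; lia.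
  apply: Dl_ext (Dl_c (a 0)) => k _. by rewrite m0 Nat.land_0_r.
apply: (@Dl_ext n _ (fun k => face0 n j a (del j (Nat.land k m)))).
  move=> k hk. rewrite /face0 face_nth ?ins_del //.
  - by rewrite Nat.land_spec hmj andbF.
  - apply: del_lt => //. exact: land_lt.
apply: (@Dl_map n.-1 n (drop_cong n j alpha) alpha (fun k => del j (Nat.land k m))) hf.
  move=> k hk. apply: del_lt => //. exact: land_lt.
move=> i x y hi hxy. rewrite drop_congE // in hxy. case E: (tb m (sig j i)).
  apply: Dl_ext (Dl_gen (sig_lt hj hi) hxy) => k _. by rewrite del_bits Nat.land_spec E andbT.
apply: Dl_ext (Dl_c x) => k _. by rewrite del_bits Nat.land_spec E andbF.
Qed.


Lemma land_rho k j m : tb k j = false -> Nat.land k (rho j m) = Nat.land k m.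
Proof.
move=> hk. apply: Nat.bits_inj => i. rewrite !Nat.land_spec rho_bits.
case: (eqVneq j i) => [<-|ne]; by rewrite ?hk ?andbT.
Qed.

Lemma main_sec (q : term ar 'I_(2 ^ n - 1)) : strong_cube_term op q ->
  forall a : nat -> A,
    Delta op n alpha a <->
    ((forall j, j < n -> Delta op n.-1 (drop_cong n j alpha) (face0 n j a)) /\
     hcomm op n alpha (eval op (fun k : 'I_(2 ^ n - 1) => a k) q) (a (2 ^ n - 1))).
Proof.
move=> hq a.
have hlast : 2 ^ n - 1 < 2 ^ n by apply: last_lt.
pose qa := eval op (fun k : 'I_(2 ^ n - 1) => a k) q.
pose d := fun k => eval op (fun m : 'I_(2 ^ n - 1) => a (Nat.land k m)) q.
have dlow : forall k, k < 2 ^ n -> k != 2 ^ n - 1 -> d k = a k.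
  move=> k hk ne. have [j hj hkj] := zero_bit hk (elimN eqP ne).
  have := hq j hj (fun m => a (Nat.land k m)).
  have -> : (fun m : 'I_(2 ^ n - 1) => a (Nat.land k (rho j m))) = (fun m => a (Nat.land k m)).
    apply: functional_extensionality => m. by rewrite land_rho.
  rewrite /d => ->. congr a. apply: Nat.bits_inj => i. rewrite Nat.land_spec rho_bits bits_last.
  case: (ltnP i n) => hi; last by rewrite (bits_high hk hi).
  case: (eqVneq j i) => [<-|ne']; by rewrite ?hkj ?andbT.
have dlast : d (2 ^ n - 1) = qa.
  rewrite /d /qa. congr eval. apply: functional_extensionality => m. congr a.
  apply: Nat.bits_inj => i. rewrite Nat.land_spec bits_last.
  case: (ltnP i n) => hi //. rewrite (bits_high _ hi) //. 
  have := ltn_ord m. lia.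
have hn0 : n <> 0 by lia.
split.
  case => [//|ha].
  have faces : forall j, j < n -> Delta op n.-1 (drop_cong n j alpha) (face0 n j a).
    move=> j hj. exact: face_proj.
  split => //. apply/hcommE.
  have hd := dcube faces q.
  apply: Dl_ext (Dl_mal ha hd (Dl_c qa)) => k hk /=.
  case: (eqVneq k (2 ^ n - 1)) => [->|ne].
    by rewrite -/(d _) dlast pm2.
  by rewrite -/(d _) dlow // pm1.
move=> [faces hc]. right. have hR := (hcommE _ _).1 hc. have hd := dcube faces q.
apply: Dl_ext (Dl_mal hd (Dl_c qa) hR) => k hk /=.
case: (eqVneq k (2 ^ n - 1)) => [->|ne].
  by rewrite -/(d _) dlast pm1.
by rewrite -/(d _) dlow // pm2.
Qed.

End Main.
End Alg.

Theorem mainTheorem9 (F : Type) (ar : F -> nat) (A : Type)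
    (op : forall f : F, ('I_(ar f) -> A) -> A)
    (n : nat) (q : term ar 'I_(2 ^ n - 1)) (alpha : nat -> A -> A -> Prop) :
  has_malcev_term op ->
  1 <= n ->
  strong_cube_term op q ->
  (forall i, i < n -> congruence op (alpha i)) ->
  forall a : nat -> A,
    Delta op n alpha a <->
    ((forall j, j < n -> Delta op n.-1 (drop_cong n j alpha) (face0 n j a)) /\
     hcomm op n alpha (eval op (fun k : 'I_(2 ^ n - 1) => a k) q) (a (2 ^ n - 1))).
Proof.
move=> [p hp] hn hq hal a.
exact: (main_sec hn hal hp hq a).
Qed.
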